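(* Let $d\ge 2$ and let $A$ be a finite set of hyperplanes in $\mathbb{R}^d$. For every open halfspace $S_1$ and every set $S_2\subseteq\mathbb{R}^d$, $$\mu_A(S_1\cup S_2)\le R_d\big(\mu_A(S_1)+1,\ \mu_A(S_2)+1\big)-1.$$
   Context: For a finite set $A$ of hyperplanes in $\mathbb{R}^d$, $V(A)$ (the vertices of the arrangement) is the set of points that are the unique common point of some $d$ hyperplanes of $A$. For $S\subseteq\mathbb{R}^d$, $\mu_A(S)=\max\{|A'| : A'\subseteq A,\ V(A')\subseteq S\}$. For positive integers $p,a,b$, $R_p(a,b)$ is the hypergraph Ramsey number: the least $R$ such that for every set $S$ of size $R$ and every 2-colouring of the $p$-element subsets of $S$ with colours 1 and 2, there is either an $a$-element subset all of whose $p$-subsets have colour 1 or a $b$-element subset all of whose $p$-subsets have colour 2. *)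

(* Defs.v *)
(* Points of R^d are row vectors 'rV[R]_d over an arbitrary
   real field R (the paper's R = the reals is an instance). *)
From HB Require Import structures.
From mathcomp Require Import all_boot all_order all_algebra.
Set Implicit Arguments. Unset Strict Implicit. Unset Printing Implicit Defensive.
Import Order.TTheory GRing.Theory Num.Theory.
Local Open Scope ring_scope.

Definition dotv (R : realFieldType) (d : nat) (u v : 'rV[R]_d) : R :=
  \sum_(i < d) u 0 i * v 0 i.

(* An arrangement of n hyperplanes in R^d: hyperplane i is
   { x | dotv (a i) x = b i } with a i <> 0; distinct indices give
   distinct hyperplanes (so A is a finite SET of hyperplanes). *)
Definition on_hyp (R : realFieldType) (d n : nat)
  (a : 'I_n -> 'rV[R]_d) (b : 'I_n -> R) (i : 'I_n) (x : 'rV[R]_d) : Prop :=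
  dotv (a i) x = b i.

Definition arrangement (R : realFieldType) (d n : nat)
  (a : 'I_n -> 'rV[R]_d) (b : 'I_n -> R) : Prop :=
  (forall i, a i != 0) /\
  (forall i j, (forall x, on_hyp a b i x <-> on_hyp a b j x) -> i = j).

Definition is_vertex (R : realFieldType) (d n : nat)
  (a : 'I_n -> 'rV[R]_d) (b : 'I_n -> R) (A' : {set 'I_n}) (p : 'rV[R]_d) : Prop :=
  exists B : {set 'I_n}, B \subset A' /\ #|B| = d /\
    (forall i, i \in B -> on_hyp a b i p) /\
    (forall q, (forall i, i \in B -> on_hyp a b i q) -> q = p).

Definition vertices_in (R : realFieldType) (d n : nat)
  (a : 'I_n -> 'rV[R]_d) (b : 'I_n -> R) (A' : {set 'I_n})
  (S : 'rV[R]_d -> Prop) : Prop :=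
  forall p, is_vertex a b A' p -> S p.

Definition is_mu (R : realFieldType) (d n : nat)
  (a : 'I_n -> 'rV[R]_d) (b : 'I_n -> R) (S : 'rV[R]_d -> Prop) (m : nat) : Prop :=
  (exists A' : {set 'I_n}, vertices_in a b A' S /\ #|A'| = m) /\
  (forall A' : {set 'I_n}, vertices_in a b A' S -> (#|A'| <= m)%N).

Definition ramsey_prop (p a b N : nat) : Prop :=
  forall c : {set 'I_N} -> bool,
    exists T : {set 'I_N},
      (#|T| = a /\ forall P : {set 'I_N}, P \subset T -> #|P| = p -> c P = true) \/
      (#|T| = b /\ forall P : {set 'I_N}, P \subset T -> #|P| = p -> c P = false).

Definition is_ramsey (p a b r : nat) : Prop :=
  ramsey_prop p a b r /\ (forall N, ramsey_prop p a b N -> (r <= N)%N).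

Definition open_halfspace (R : realFieldType) (d : nat) (S : 'rV[R]_d -> Prop) : Prop :=
  exists (c : 'rV[R]_d) (e : R), c != 0 /\ forall x, S x <-> e < dotv c x.

(* Main.v *)
Require Import Defs.
From HB Require Import structures.
From mathcomp Require Import all_boot all_order all_algebra.
From Stdlib Require Import ClassicalEpsilon.
Import Order.TTheory GRing.Theory Num.Theory.
Local Open Scope ring_scope.
Set Implicit Arguments. Unset Strict Implicit.

Definition determ (R : realFieldType) (d n : nat)
  (a : 'I_n -> 'rV[R]_d) (b : 'I_n -> R) (B : {set 'I_n}) (p : 'rV[R]_d) : Prop :=
  (forall i, i \in B -> on_hyp a b i p) /\
  (forall q, (forall i, i \in B -> on_hyp a b i q) -> q = p).

Lemma sub_vertices (R : realFieldType) (d n : nat) (a : 'I_n -> 'rV[R]_d) (b : 'I_n -> R)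
  (A1 A2 : {set 'I_n}) S : A1 \subset A2 -> vertices_in a b A2 S -> vertices_in a b A1 S.
Proof.
move=> sub H p [B [HB [cB [H1 H2]]]]; apply: H; exists B; split=> //.
exact: subset_trans sub.
Qed.

Theorem lemma2 (R : realFieldType) (d n : nat) (a : 'I_n -> 'rV[R]_d) (b : 'I_n -> R)
  (S1 S2 : 'rV[R]_d -> Prop) (m1 m2 m r : nat) :
  (2 <= d)%N -> arrangement a b -> open_halfspace S1 ->
  is_mu a b S1 m1 -> is_mu a b S2 m2 ->
  is_mu a b (fun x => S1 x \/ S2 x) m ->
  is_ramsey d m1.+1 m2.+1 r ->
  (m <= r - 1)%N.
Proof.
move=> _ _ _ [_ mu1] [_ mu2] [[A' [VA' cA']] _] [ram _].
case: (leqP m (r - 1)) => // lt; exfalso.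
have Hr : (r <= #|A'|)%N by rewrite cA'; move: lt; case: r {ram} => //= r; rewrite subn1.
pose f (i : 'I_r) : 'I_n := enum_val (widen_ord Hr i).
have finj : injective f.
  by move=> i j /enum_val_inj [] /val_inj.
have fA : forall i, f i \in A' by move=> i; apply: enum_valP.
pose c (P : {set 'I_r}) : bool :=
  if excluded_middle_informative (exists p, determ a b (f @: P) p /\ S1 p) then true else false.
have [T HT] := ram c.
have TA : f @: T \subset A'.
  by apply/subsetP=> x /imsetP [y _ ->]; apply: fA.
have key : forall p, is_vertex a b (f @: T) p ->
    exists P : {set 'I_r}, P \subset T /\ #|P| = d /\ determ a b (f @: P) p.
  move=> p [B [HB [cB [H1 H2]]]].
  exists [set x in T | f x \in B]; split; first by apply/subsetP=> x; rewrite inE => /andP[].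
  have EB : f @: [set x in T | f x \in B] = B.
    apply/setP=> z; apply/imsetP/idP.
      by move=> [y]; rewrite inE => /andP[_ Hy] ->.
    move=> zB; have := subsetP HB z zB; case/imsetP=> y yT Ez.
    by exists y => //; rewrite inE yT -Ez zB.
  split; first by rewrite -cB -{2}EB card_imset.
  by rewrite EB; split.
have Vp : forall p, is_vertex a b (f @: T) p -> S1 p \/ S2 p.
  by move=> p Hp; apply: (sub_vertices TA VA').
case: HT => [[cT HT] | [cT HT]].
- have : vertices_in a b (f @: T) S1.
    move=> p Hp; have [P [PT [cP dP]]] := key p Hp.
    have := HT P PT cP; rewrite /c; case: excluded_middle_informative => // [[p' [dp' Sp']]] _.
    by rewrite -(proj2 dP p' (proj1 dp')).
  move/mu1; rewrite card_imset // cT ltnn //.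
- have : vertices_in a b (f @: T) S2.
    move=> p Hp; have [P [PT [cP dP]]] := key p Hp.
    have := HT P PT cP; rewrite /c; case: excluded_middle_informative => // nE _.
    case: (Vp p Hp) => // S1p; exfalso; apply: nE; by exists p.
  move/mu2; rewrite card_imset // cT ltnn //.
Qed.
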